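(* Let $r:\tilde Q\to\mathbb R$ be a function such that equation (E-IV)(a) holds at every $(K,L,M)\in\tilde Q$ with $K+M<0$ and $L+M<0$. If $r>0$ at all points of $\tilde Q$ lying in the plane $K+M=0$ or in the plane $L+M=0$, then $r>0$ on all of $\tilde Q$.
   Context: $\tilde Q=\{(K,L,M)\in\mathbb Z^3: L+M\le0,\ K+M\le0,\ K+L\ge0\}$. Fix $\alpha_1,\alpha_2,\alpha_3>0$ with $\alpha_1+\alpha_2+\alpha_3=\pi$. Equation (E-IV)(a) at $(K,L,M)$: with $r=r(K,L,M)$, $r_1=r(K,L+1,M)$, $r_2=r(K,L,M+1)$, $r_3=r(K+1,L,M)$, $r(r_1\sin\alpha_3+r_2\sin\alpha_1+r_3\sin\alpha_2)=r_1r_2\sin\alpha_2+r_2r_3\sin\alpha_3+r_3r_1\sin\alpha_1$. *)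

(* Defs.v *)
From Stdlib Require Import Reals ZArith.
Open Scope R_scope.

Definition inQt (K L M : Z) : Prop :=
  (L + M <= 0)%Z /\ (K + M <= 0)%Z /\ (0 <= K + L)%Z.

Definition EIVa (a1 a2 a3 : R) (r : Z -> Z -> Z -> R) (K L M : Z) : Prop :=
  let r0 := r K L M in
  let r1 := r K (L + 1)%Z M in
  let r2 := r K L (M + 1)%Z in
  let r3 := r (K + 1)%Z L M in
  r0 * (r1 * sin a3 + r2 * sin a1 + r3 * sin a2)
  = r1 * r2 * sin a2 + r2 * r3 * sin a3 + r3 * r1 * sin a1.

(* Main.v *)
Require Import Defs.
From Stdlib Require Import Reals ZArith Lia Lra Psatz.
Open Scope R_scope.

Theorem lemma3 (a1 a2 a3 : R) (r : Z -> Z -> Z -> R)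
  (ha1 : 0 < a1) (ha2 : 0 < a2) (ha3 : 0 < a3) (hsum : a1 + a2 + a3 = PI)
  (hE : forall K L M : Z, inQt K L M -> (K + M < 0)%Z -> (L + M < 0)%Z ->
          EIVa a1 a2 a3 r K L M)
  (hbd : forall K L M : Z, inQt K L M -> (K + M = 0)%Z \/ (L + M = 0)%Z ->
          0 < r K L M) :
  forall K L M : Z, inQt K L M -> 0 < r K L M.
Proof.
  assert (s1 : 0 < sin a1) by (apply sin_gt_0; lra).
  assert (s2 : 0 < sin a2) by (apply sin_gt_0; lra).
  assert (s3 : 0 < sin a3) by (apply sin_gt_0; lra).
  assert (H : forall n : nat, forall K L M, inQt K L M ->
            (- K - L - 2 * M <= Z.of_nat n)%Z -> 0 < r K L M).
  { induction n as [|n IH]; intros K L M HQ Hn; unfold inQt in HQ.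
    - apply hbd; [unfold inQt; lia | lia].
    - destruct (Z.eq_dec (K + M) 0) as [e|e]; [apply hbd; [unfold inQt; lia|lia]|].
      destruct (Z.eq_dec (L + M) 0) as [e'|e']; [apply hbd; [unfold inQt; lia|lia]|].
      assert (h1 : 0 < r K (L + 1)%Z M) by (apply IH; unfold inQt; lia).
      assert (h2 : 0 < r K L (M + 1)%Z) by (apply IH; unfold inQt; lia).
      assert (h3 : 0 < r (K + 1)%Z L M) by (apply IH; unfold inQt; lia).
      pose proof (hE K L M ltac:(unfold inQt; lia) ltac:(lia) ltac:(lia)) as E.
      unfold EIVa in E; simpl in E.
      set (r0 := r K L M) in *.
      set (x1 := r K (L + 1)%Z M) in *.
      set (x2 := r K L (M + 1)%Z) in *.
      set (x3 := r (K + 1)%Z L M) in *.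
      assert (D : 0 < x1 * sin a3 + x2 * sin a1 + x3 * sin a2).
      { assert (0 < x1 * sin a3) by (apply Rmult_lt_0_compat; lra).
        assert (0 < x2 * sin a1) by (apply Rmult_lt_0_compat; lra).
        assert (0 < x3 * sin a2) by (apply Rmult_lt_0_compat; lra). lra. }
      assert (N : 0 < x1 * x2 * sin a2 + x2 * x3 * sin a3 + x3 * x1 * sin a1).
      { assert (0 < x1 * x2 * sin a2) by (repeat apply Rmult_lt_0_compat; lra).
        assert (0 < x2 * x3 * sin a3) by (repeat apply Rmult_lt_0_compat; lra).
        assert (0 < x3 * x1 * sin a1) by (repeat apply Rmult_lt_0_compat; lra). lra. }
      destruct (Rle_or_lt r0 0) as [Hr|Hr]; [|exact Hr].
      exfalso.
      set (d := x1 * sin a3 + x2 * sin a1 + x3 * sin a2) in *.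
      assert (r0 * d <= 0) by nra. lra. }
  intros K L M HQ. apply (H (Z.to_nat (- K - L - 2 * M))); auto.
  unfold inQt in HQ. lia.
Qed.
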